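(* Let $(E,\rho_\theta)$ be a $b_v(\theta)$ metric space whose function $\theta$ is bounded, let $S:E\to E$, $u_0\in E$, and let $\{u_n\}$ be defined by $u_{n+1}=Su_n$ (so $u_n=S^nu_0$), with $u_n\neq u_m$ for all distinct $n,m\in\mathbb{N}$. Assume there exist $c\in[0,1)$ and $k_1,k_2\in[0,\infty)$ such that $\rho_\theta(u_m,u_n)\le c\,\rho_\theta(u_{m-1},u_{n-1})+k_1c^m+k_2c^m$ for all $n,m\in\mathbb{N}$. Then $\{u_n\}$ is a Cauchy sequence in $(E,\rho_\theta)$.
   Context: Let $E$ be a nonempty set, $\theta:E\times E\to[1,\infty)$ a function and $v\in\mathbb{N}$. A map $\rho_\theta:E\times E\to[0,\infty)$ is a $b_v(\theta)$ metric (and $(E,\rho_\theta)$ a $b_v(\theta)$ metric space) if for all $u,w\in E$: $\rho_\theta(u,w)=0$ iff $u=w$; $\rho_\theta(u,w)=\rho_\theta(w,u)$; and for all $u,z_1,\dots,z_v,w\in E$ pairwise distinct, $\rho_\theta(u,w)\le\theta(u,w)[\rho_\theta(u,z_1)+\rho_\theta(z_1,z_2)+\dots+\rho_\theta(z_{v-1},z_v)+\rho_\theta(z_v,w)]$. A sequence $\{u_n\}$ is Cauchy if for every $\varepsilon>0$ there is $n_0\in\mathbb{N}$ with $\rho_\theta(u_n,u_{n+p})<\varepsilon$ for all $n\ge n_0$ and $p>0$. *)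

(* Defs.v *)
From Stdlib Require Import Reals Lra Lia.
Open Scope R_scope.

Fixpoint chain_sum {E : Type} (rho : E -> E -> R) (z : nat -> E) (k : nat) : R :=
  match k with
  | O => 0
  | S k' => chain_sum rho z k' + rho (z k) (z (S k))
  end.

Definition is_bv_metric {E : Type} (theta : E -> E -> R) (v : nat)
  (rho : E -> E -> R) : Prop :=
  (forall x y, 1 <= theta x y) /\
  (forall x y, 0 <= rho x y) /\
  (forall x y, rho x y = 0 <-> x = y) /\
  (forall x y, rho x y = rho y x) /\
  (forall (u w : E) (z : nat -> E),
      u <> w ->
      (forall i, (1 <= i <= v)%nat -> z i <> u /\ z i <> w) ->
      (forall i j, (1 <= i <= v)%nat -> (1 <= j <= v)%nat -> i <> j -> z i <> z j) ->
      rho u w <= theta u w *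
        (rho u (z 1%nat) + chain_sum rho z (v - 1) + rho (z v) w)).

Definition bv_cauchy {E : Type} (rho : E -> E -> R) (u : nat -> E) : Prop :=
  forall eps, 0 < eps -> exists n0 : nat,
    forall n p : nat, (n0 <= n)%nat -> (0 < p)%nat -> rho (u n) (u (n + p)%nat) < eps.

(* Main.v *)
Require Import Defs.
From Stdlib Require Import Reals Lra Lia.
Open Scope R_scope.

Lemma bern2 (h : R) (n : nat) : 0 <= h ->
  1 + INR n * h + INR n * (INR n - 1) / 2 * h ^ 2 <= (1 + h) ^ n.
Proof.
  intro Hh. induction n as [|n IH].
  - simpl. lra.
  - rewrite S_INR. simpl pow. simpl pow in IH.
    assert (Hn : 0 <= INR n) by apply pos_INR.
    assert (Hnn : 0 <= INR n * (INR n - 1)).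
    { destruct n. simpl. lra. rewrite S_INR. assert (0 <= INR n) by apply pos_INR. nra. }
    assert (Hh3 : 0 <= INR n * (INR n - 1) * (h*h*h)) by (apply Rmult_le_pos; [lra| nra]).
    nra.
Qed.

Lemma bern (h : R) (n : nat) : 0 <= h ->
  INR n * (INR n - 1) / 2 * h ^ 2 <= (1 + h) ^ n.
Proof.
  intro Hh. pose proof (bern2 h n Hh). pose proof (pos_INR n).
  assert (0 <= INR n * h) by nra. lra.
Qed.

Lemma ncn (c : R) : 0 <= c < 1 -> forall eps, 0 < eps ->
  exists N : nat, forall n, (N <= n)%nat -> INR n * c ^ n < eps.
Proof.
  intros Hc eps He.
  set (h := (1 - c) / (1 + c)).
  assert (Hh : 0 < h) by (unfold h; apply Rdiv_lt_0_compat; lra).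
  assert (Hch : 0 <= c * (1 + h) <= 1).
  { split. apply Rmult_le_pos; lra. unfold h.
    replace (c * (1 + (1 - c) / (1 + c))) with (2 * c / (1 + c)) by (field; lra).
    unfold Rdiv. apply (Rmult_le_reg_r (1 + c)). lra.
    rewrite Rmult_assoc, Rinv_l by lra. lra. }
  destruct (INR_archimed 1 (2 / (h ^ 2 * eps) + 1)) as [N HN]; [lra|].
  exists N. intros n Hn.
  assert (HNn : INR N <= INR n) by (apply le_INR; exact Hn).
  assert (Hh2 : 0 < h ^ 2) by (apply pow_lt; lra).
  assert (Hq : 0 < 2 / (h ^ 2 * eps)) by (apply Rdiv_lt_0_compat; [lra| apply Rmult_lt_0_compat; lra]).
  assert (Hbig : (INR n - 1) * h ^ 2 * eps > 2).
  { assert (INR n - 1 > 2 / (h ^ 2 * eps)) by lra.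
    assert (HH : (2 / (h ^ 2 * eps)) * (h^2 * eps) = 2) by (field; lra).
    assert (0 < h^2*eps) by (apply Rmult_lt_0_compat; lra).
    nra. }
  assert (Hb := bern h n (Rlt_le _ _ Hh)).
  assert (Hp : c ^ n * (1 + h) ^ n <= 1).
  { rewrite <- Rpow_mult_distr. pose proof (pow_incr (c * (1 + h)) 1 n Hch) as Hq2. rewrite pow1 in Hq2. exact Hq2. }
  assert (Hcn : 0 <= c ^ n) by (apply pow_le; lra).
  assert (Hx : 0 <= INR n * c ^ n) by (apply Rmult_le_pos; [apply pos_INR| lra]).
  assert (Hkey : INR n * c ^ n * ((INR n - 1) / 2 * h ^ 2) <= 1).
  { assert (c ^ n * (INR n * (INR n - 1) / 2 * h ^ 2) <= c^n * (1+h)^n)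
      by (apply Rmult_le_compat_l; lra).
    replace (INR n * c ^ n * ((INR n - 1) / 2 * h ^ 2))
      with (c ^ n * (INR n * (INR n - 1) / 2 * h ^ 2)) by (clear; unfold Rdiv; ring). lra. }
  destruct (Rlt_or_le (INR n * c ^ n) eps) as [|Hge]; [assumption|].
  exfalso.
  assert (HY : 0 < (INR n - 1) / 2 * h ^ 2) by nra.
  nra.
Qed.

Lemma chain_sum_nonneg {E : Type} (rho : E -> E -> R) (z : nat -> E) k :
  (forall x y, 0 <= rho x y) -> 0 <= chain_sum rho z k.
Proof.
  intro H. induction k; simpl. lra. specialize (H (z (S k)) (z (S (S k)))). lra.
Qed.

Lemma sum_ge_term (f : nat -> R) (T : nat) :
  (forall q, 0 <= f q) -> forall q, (q <= T)%nat -> f q <= sum_f_R0 f T.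
Proof.
  intros Hf. induction T as [|T IH]; intros q Hq.
  - replace q with 0%nat by lia. simpl. lra.
  - simpl. destruct (Nat.eq_dec q (S T)) as [->|Hne].
    + assert (0 <= sum_f_R0 f T).
      { clear IH Hq. induction T; simpl. apply Hf. specialize (Hf (S T)). lra. }
      lra.
    + specialize (IH q ltac:(lia)). specialize (Hf (S T)). lra.
Qed.

Theorem mainTheorem8 (E : Type) (theta : E -> E -> R) (v : nat) (rho : E -> E -> R)
  (S : E -> E) (u0 : E) (c k1 k2 : R) :
  (1 <= v)%nat ->
  is_bv_metric theta v rho ->
  (exists M : R, forall x y, theta x y <= M) ->
  (forall n m : nat, n <> m -> Nat.iter n S u0 <> Nat.iter m S u0) ->
  0 <= c < 1 -> 0 <= k1 -> 0 <= k2 ->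
  (forall m n : nat, (1 <= m)%nat -> (1 <= n)%nat ->
     rho (Nat.iter m S u0) (Nat.iter n S u0)
       <= c * rho (Nat.iter (m - 1) S u0) (Nat.iter (n - 1) S u0) + k1 * c ^ m + k2 * c ^ m) ->
  bv_cauchy rho (fun n => Nat.iter n S u0).
Proof.
  rename S into F.
  intros Hv [Hth [Hpos [Hzero [Hsym Htri]]]] [M HM] Hdist Hc Hk1 Hk2 Hcon.
  set (u := fun n => Nat.iter n F u0).
  set (K := k1 + k2).
  assert (HK : 0 <= K) by (unfold K; lra).
  assert (Hiter : forall a b j, rho (u (a + j)%nat) (u (b + j)%nat)
             <= c ^ j * rho (u a) (u b) + INR j * K * c ^ (a + j)).
  { intros a b j. induction j as [|j IH].
    - rewrite !Nat.add_0_r. simpl. lra.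
    - rewrite !Nat.add_succ_r.
      specialize (Hcon (Datatypes.S (a + j)) (Datatypes.S (b + j)) ltac:(lia) ltac:(lia)).
      replace (Datatypes.S (a + j) - 1)%nat with (a + j)%nat in Hcon by lia.
      replace (Datatypes.S (b + j) - 1)%nat with (b + j)%nat in Hcon by lia.
      fold (u (Datatypes.S (a+j))) (u (Datatypes.S (b+j))) (u (a+j)%nat) (u (b+j)%nat) in Hcon.
      assert (c * rho (u (a + j)%nat) (u (b + j)%nat) <=
              c * (c ^ j * rho (u a) (u b) + INR j * K * c ^ (a + j)))
        by (apply Rmult_le_compat_l; lra).
      rewrite S_INR. simpl pow in *. unfold K in *. nra. }
  assert (HM1 : 1 <= M) by (specialize (Hth u0 u0); specialize (HM u0 u0); lra).
  destruct (ncn c Hc (/ (2 * M))) as [L0 HL0].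
  { apply Rinv_0_lt_compat. lra. }
  set (L := Datatypes.S L0).
  assert (HcL : M * c ^ L <= 1 / 2).
  { specialize (HL0 L ltac:(unfold L; lia)).
    assert (1 <= INR L) by (unfold L; rewrite S_INR; pose proof (pos_INR L0); lra).
    assert (0 <= c ^ L) by (apply pow_le; lra).
    assert (c ^ L < / (2 * M)) by nra.
    assert (M * / (2 * M) = 1/2) by (field; lra).
    nra. }
  set (T := (L + v)%nat).
  assert (HcT : c ^ T <= c ^ L).
  { unfold T. rewrite pow_add. assert (c ^ v <= 1) by (rewrite <- (pow1 v); apply pow_incr; lra).
    assert (0 <= c ^ L) by (apply pow_le; lra). assert (0 <= c^v) by (apply pow_le; lra). nra. }
  assert (HcT1 : c ^ T <= 1) by (rewrite <- (pow1 T); apply pow_incr; lra).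
  assert (HcT0 : 0 <= c ^ T) by (apply pow_le; lra).
  set (z := fun i => u (L + i)%nat).
  set (X := rho (u 0%nat) (z 1%nat) + chain_sum rho z (v - 1)).
  assert (HX : 0 <= X) by (unfold X; pose proof (chain_sum_nonneg rho z (v-1) Hpos); pose proof (Hpos (u 0%nat) (z 1%nat)); lra).
  set (A := M * X + M * INR T * K).
  assert (HA : 0 <= A).
  { unfold A. pose proof (pos_INR T). assert (0 <= INR T * K) by nra. nra. }
  set (Sg := sum_f_R0 (fun q => rho (u 0%nat) (u q)) T).
  set (B := 2 * A + Sg).
  assert (HSg : forall q, (q <= T)%nat -> rho (u 0%nat) (u q) <= Sg).
  { intros q Hq. apply (sum_ge_term (fun q => rho (u 0%nat) (u q))); auto. }
  assert (HSg0 : 0 <= Sg) by (pose proof (HSg 0%nat ltac:(lia)); pose proof (Hpos (u 0%nat) (u 0%nat)); lra).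
  assert (Hstep : forall q, (1 <= q)%nat -> rho (u 0%nat) (u (q + T)%nat) <= A + / 2 * rho (u 0%nat) (u q)).
  { intros q Hq1.
    assert (Htr := Htri (u 0%nat) (u (q + T)%nat) z).
    assert (Hle : rho (u 0%nat) (u (q + T)%nat) <=
                  theta (u 0%nat) (u (q + T)%nat) * (X + rho (z v) (u (q + T)%nat))).
    { unfold X. replace (rho (u 0%nat) (z 1%nat) + chain_sum rho z (v - 1) + rho (z v) (u (q + T)%nat))
        with (rho (u 0%nat) (z 1%nat) + chain_sum rho z (v - 1) + rho (z v) (u (q + T)%nat)) in Htr by reflexivity.
      rewrite Rplus_assoc in Htr |- *.
      replace (rho (u 0%nat) (z 1%nat) + (chain_sum rho z (v - 1) + rho (z v) (u (q + T)%nat)))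
        with (rho (u 0%nat) (z 1%nat) + chain_sum rho z (v - 1) + rho (z v) (u (q + T)%nat)) by ring.
      replace (rho (u 0%nat) (z 1%nat) + (chain_sum rho z (v - 1) + rho (z v) (u (q + T)%nat)))
        with (rho (u 0%nat) (z 1%nat) + chain_sum rho z (v - 1) + rho (z v) (u (q + T)%nat)) in Htr by ring.
      apply Htr.
      - apply Hdist. unfold T, L. lia.
      - intros i Hi. unfold z, u. split; apply Hdist; unfold T, L; lia.
      - intros i j Hi Hj Hij. unfold z, u. apply Hdist. lia. }
    assert (Hzv : z v = u (0 + T)%nat) by (unfold z, T; f_equal).
    rewrite Hzv in Hle.
    assert (Hit := Hiter 0%nat q T). rewrite Nat.add_0_l in Hit.
    assert (Hd0 := Hpos (u 0%nat) (u q)).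
    assert (HTK : INR T * K * c ^ T <= INR T * K).
    { pose proof (pos_INR T). assert (0 <= INR T * K) by nra. nra. }
    assert (Hbr : 0 <= X + rho (u (0 + T)%nat) (u (q + T)%nat)) by (pose proof (Hpos (u (0+T)%nat) (u (q+T)%nat)); lra).
    assert (Hle2 : theta (u 0%nat) (u (q + T)%nat) * (X + rho (u (0 + T)%nat) (u (q + T)%nat))
                   <= M * (X + rho (u (0 + T)%nat) (u (q + T)%nat)))
      by (apply Rmult_le_compat_r; auto).
    rewrite Nat.add_0_l in Hle2.
    assert (Hle3 : M * (X + rho (u T) (u (q + T)%nat)) <= M * (X + (c ^ T * rho (u 0%nat) (u q) + INR T * K)))
      by (apply Rmult_le_compat_l; lra).
    assert (M * c ^ T <= 1/2) by nra.
    assert (M * (c ^ T * rho (u 0%nat) (u q)) <= 1/2 * rho (u 0%nat) (u q)) by nra.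
    unfold A. rewrite Nat.add_0_l in Hle. nra. }
  assert (Hbound : forall p, rho (u 0%nat) (u p) <= B).
  { assert (forall n p, (p <= n)%nat -> rho (u 0%nat) (u p) <= B).
    { induction n as [|n IH]; intros p Hp.
      - pose proof (HSg p ltac:(lia)). unfold B. lra.
      - destruct (Nat.le_gt_cases p T) as [HpT|HpT].
        + pose proof (HSg p HpT). unfold B. lra.
        + replace p with ((p - T) + T)%nat by lia.
          pose proof (Hstep (p - T)%nat ltac:(lia)).
          pose proof (IH (p - T)%nat ltac:(unfold T, L in *; lia)).
          unfold B in *. lra. }
    intro p. apply (H p p). lia. }
  assert (HB0 : 0 <= B) by (pose proof (Hbound 0%nat); pose proof (Hpos (u 0%nat) (u 0%nat)); lra).
  intros eps Heps.
  destruct (ncn c Hc (eps / (B + K + 1))) as [N HN].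
  { apply Rdiv_lt_0_compat; lra. }
  exists (Datatypes.S N). intros n p Hn Hp.
  fold (u n) (u (n + p)%nat).
  assert (Hit := Hiter 0%nat p n). rewrite Nat.add_0_l, Nat.add_comm in Hit.
  specialize (HN n ltac:(lia)).
  assert (Hn1 : 1 <= INR n) by (destruct n; [lia|rewrite S_INR; pose proof (pos_INR n); lra]).
  assert (Hcn : 0 <= c ^ n) by (apply pow_le; lra).
  assert (Hbp := Hbound p).
  assert (H1 : c ^ n * rho (u 0%nat) (u p) <= c ^ n * B) by (apply Rmult_le_compat_l; lra).
  assert (H2 : c ^ n * B <= INR n * c ^ n * B).
  { assert (0 <= c ^ n * B) by (apply Rmult_le_pos; lra).
    assert (0 <= (INR n - 1) * (c ^ n * B)) by (apply Rmult_le_pos; lra). nra. }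
  assert (H3 : INR n * c ^ n * (B + K + 1) < eps / (B + K + 1) * (B + K + 1))
    by (apply Rmult_lt_compat_r; lra).
  assert (H4 : eps / (B + K + 1) * (B + K + 1) = eps) by (field; lra).
  assert (0 <= INR n * c ^ n) by nra.
  nra.
Qed.
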